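(* Let $(H,v)$ be a rooted graph. Then for any integers $k\ge 0$ and $g\ge 2$, \[ X_{P^k(C_g,\,H)}=(g-1)X_{H^{k+g-1}}-\sum_{l=1}^{g-2}X_{C_{g-l}}\,X_{H^{k+l-1}}. \]
   Context: All graphs are finite simple graphs. The chromatic symmetric function of a graph $G$ is $X_G=\sum_{\kappa}\prod_{v\in V(G)}x_{\kappa(v)}$, where $\kappa$ ranges over proper colorings $\kappa:V(G)\to\{1,2,\dots\}$. $C_g$ is the cycle on $g$ vertices for $g\ge 3$, and $C_2:=K_2$; cycles are rooted at any vertex. For rooted graphs $(G,u)$, $(H,v)$ and $k\ge 0$, $P^k(G,H)$ is obtained from the disjoint union of $G$ and $H$ by adding a path of length $k$ (with $k-1$ new internal vertices) joining $u$ and $v$ (for $k=0$, $u$ and $v$ are identified). The tailed graph $H^k$ is $P^k(H,K_1)$, i.e., $H$ with a pendant path of length $k$ attached at its root. *)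

(* Defs.v *)
From HB Require Import structures.
From mathcomp Require Import all_boot all_algebra.
From mathcomp Require Import mpoly.
Set Implicit Arguments. Unset Strict Implicit. Unset Printing Implicit Defensive.
Import GRing.Theory.
Local Open Scope ring_scope.

Record rooted_graph := RGraph { rvtx : finType; radj : rel rvtx; rroot : rvtx }.
Arguments radj : clear implicits.
Arguments rroot : clear implicits.

Definition simple_rgraph (G : rooted_graph) :=
  ssrbool.symmetric (radj G) /\ irreflexive (radj G).

(* Chromatic symmetric function, truncated to n variables x_0..x_{n-1}
   (colours in 'I_n).  Two symmetric functions are equal iff all their
   truncations agree, so X_G is represented by the family (chrom n G)_n. *)
Definition chrom (n : nat) (G : rooted_graph) : {mpoly int[n]} :=
  \sum_(f : {ffun rvtx G -> 'I_n} |
          [forall x, forall y, radj G x y ==> (f x != f y)])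
     \prod_(x : rvtx G) 'X_(f x).

Definition K1 : rooted_graph := RGraph (fun (_ _ : unit) => false) tt.

(* Cycle C_g on vertices 0..g-1 (type 'I_(g.-1.+1), which is 'I_g for g >= 1),
   i adjacent to i+1 mod g; for g = 2 this is K_2. Rooted at 0. *)
Definition cycle_adj (g : nat) (i j : 'I_(g.-1.+1)) : bool :=
  (i != j) && ((val j == (val i).+1 %% g)%N || (val i == (val j).+1 %% g)%N).
Definition cycleG (g : nat) : rooted_graph := RGraph (@cycle_adj g) ord0.

(* P^k(G,H): disjoint union of G and H joined by a path of length k from
   root u of G to root v of H.  Vertex set: V(G) + {p_1..p_k} + (V(H) \ v),
   where the path is u = p_0, p_1, ..., p_k and p_k plays the role of v
   (for k = 0, v is identified with u). *)
Section Pk.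
Variables (k : nat) (G H : rooted_graph).

Definition PkV : finType :=
  ((rvtx G + 'I_k) + {w : rvtx H | w != rroot H})%type.

Definition Pk_pos (i : nat) : PkV :=
  match i with
  | 0 => inl (inl (rroot G))
  | j.+1 => oapp (fun o : 'I_k => inl (inr o)) (inl (inl (rroot G))) (insub j)
  end.

Definition Pk_embH (w : rvtx H) : PkV :=
  match insub w : option {w : rvtx H | w != rroot H} with
  | Some w' => inr w'
  | None => Pk_pos k
  end.

Definition Pk_adj (x y : PkV) : bool :=
  [|| [exists a, exists b,
         [&& radj G a b, x == inl (inl a) & y == inl (inl b)]],
      [exists a, exists b,
         [&& radj H a b, x == Pk_embH a & y == Pk_embH b]]
    | [exists i : 'I_k,
         ((x == Pk_pos i) && (y == Pk_pos i.+1))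
         || ((y == Pk_pos i) && (x == Pk_pos i.+1))]].

Definition Pk : rooted_graph := RGraph Pk_adj (inl (inl (rroot G))).
End Pk.

Definition tailG (H : rooted_graph) (k : nat) : rooted_graph := Pk k H K1.

(* Main.v *)
Require Import Defs.
From HB Require Import structures.
From mathcomp Require Import all_boot all_algebra.
From mathcomp Require Import mpoly.
From mathcomp Require Import ring.
From mathcomp Require Import zify.
Set Implicit Arguments. Unset Strict Implicit. Unset Printing Implicit Defensive.
Import GRing.Theory.
Local Open Scope ring_scope.

Section S.
Variable n : nat.
Local Notation R := {mpoly int[n]}.
Local Notation C := 'I_n.
Local Notation X c := ('X_c : R).

Definition pc k (b : C) (p : {ffun 'I_k -> C}) (i : nat) : C :=
  if i is j.+1 then oapp p b (insub j) else b.
Arguments pc : simpl never.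
Definition pathok k b (p : {ffun 'I_k -> C}) :=
  [forall i : 'I_k, pc b p i != pc b p i.+1].
Definition Wp k b (F : C -> R) : R :=
  \sum_(p : {ffun 'I_k -> C} | pathok b p) (\prod_i X (p i)) * F (pc b p k).
Definition fcons k (c : C) (q : {ffun 'I_k -> C}) : {ffun 'I_k.+1 -> C} :=
  [ffun i : 'I_k.+1 => pc c q i].
Definition ftail k (p : {ffun 'I_k.+1 -> C}) : {ffun 'I_k -> C} :=
  [ffun i => p (lift ord0 i)].

Lemma pc_fcons k b c (q : {ffun 'I_k -> C}) i : (i <= k)%N ->
  pc b (fcons c q) i.+1 = pc c q i.
Proof.
move=> hi; rewrite /pc; case: insubP => [o _ <-|/negP] /=.
  by rewrite ffunE.
by rewrite ltnS hi.
Qed.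

Lemma fcons0 k c (q : {ffun 'I_k -> C}) : fcons c q ord0 = c.
Proof. by rewrite ffunE. Qed.

Lemma fcons_lift k c (q : {ffun 'I_k -> C}) i : fcons c q (lift ord0 i) = q i.
Proof.
rewrite ffunE; have -> : (lift ord0 i : nat) = i.+1 by rewrite lift0.
by rewrite /pc valK.
Qed.

Lemma ftailK k (p : {ffun 'I_k.+1 -> C}) : fcons (p ord0) (ftail p) = p.
Proof.
apply/ffunP => i; rewrite ffunE /pc; case: i => [[|j] hj] /=.
  by congr (p _); apply: val_inj.
case: insubP => [o _ ho|/negP]; last by rewrite -ltnS hj.
by rewrite /= ffunE; congr (p _); apply: val_inj; rewrite /= -ho /bump /=.
Qed.

Lemma fconsK k c (q : {ffun 'I_k -> C}) : ftail (fcons c q) = q.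
Proof. by apply/ffunP => i; rewrite ffunE fcons_lift. Qed.

Lemma sum_fcons k (P : pred {ffun 'I_k.+1 -> C}) (F : {ffun 'I_k.+1 -> C} -> R) :
  \sum_(p | P p) F p = \sum_c \sum_(q | P (fcons c q)) F (fcons c q).
Proof.
rewrite (reindex (fun cq : C * {ffun 'I_k -> C} => fcons cq.1 cq.2)) /=.
  by rewrite pair_big_dep.
exists (fun p : {ffun _ -> C} => (p ord0, ftail p)) => [[c q]|p] _ /=.
  by rewrite fcons0 fconsK.
by rewrite ftailK.
Qed.

Lemma pathok_fcons k b c (q : {ffun 'I_k -> C}) :
  pathok b (fcons c q) = (b != c) && pathok c q.
Proof.
rewrite {1}/pathok; apply/forallP/andP.
  move=> h; split.
    by have := h ord0; rewrite (pc_fcons b c q (leq0n k)).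
  apply/forallP => i; have := h (lift ord0 i); rewrite lift0.
  by rewrite (pc_fcons b c q (ltnW (ltn_ord i))) (pc_fcons b c q (ltn_ord i)).
move=> [hbc /forallP h] [[|j] hj] /=.
  by rewrite (pc_fcons b c q (leq0n k)).
have hj' : (j < k)%N by [].
by rewrite (pc_fcons b c q (ltnW hj')) (pc_fcons b c q hj'); exact: (h (Ordinal hj')).
Qed.

Lemma Wp0 b F : Wp 0 b F = F b.
Proof.
rewrite /Wp (big_pred1 [ffun i => b]) ?big_ord0 ?mul1r //.
move=> p /=; apply/idP/eqP.
  by move=> _; apply/ffunP => -[].
by move=> _; apply/forallP => -[].
Qed.

Lemma Wp_rec k b F :
  Wp k.+1 b F = \sum_(c | c != b) X c * Wp k c F.
Proof.
rewrite /Wp sum_fcons [RHS]big_mkcond; apply: eq_bigr => c _.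
rewrite eq_sym; case: eqP => [->|ne] /=.
  by rewrite big_pred0 // => q; rewrite pathok_fcons eqxx.
rewrite big_distrr; apply: eq_big => q.
  by rewrite pathok_fcons; case: eqP.
move=> _; rewrite big_ord_recl fcons0 pc_fcons //.
rewrite -mulrA; congr (_ * (_ * _)).
by apply: eq_bigr => i _; rewrite fcons_lift.
Qed.

Local Notation W k b a := (Wp k b (fun d => (d == a)%:R)).

Lemma Wp_ext k b F G : F =1 G -> Wp k b F = Wp k b G.
Proof. by move=> e; apply: eq_bigr => p _; rewrite e. Qed.

Lemma Wp_lin k b F : Wp k b F = \sum_a W k b a * F a.
Proof.
rewrite /Wp; under [RHS]eq_bigr do rewrite big_distrl.
rewrite exchange_big /=; apply: eq_bigr => p _.
rewrite (bigD1 (pc b p k)) //= eqxx mulr1 [Y in _ + Y]big1 ?addr0 // => a ne.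
by rewrite eq_sym (negbTE ne) mulr0 mul0r.
Qed.

Lemma WpB k b F G : Wp k b (fun a => F a - G a) = Wp k b F - Wp k b G.
Proof. by rewrite /Wp -sumrB; apply: eq_bigr => p _; rewrite mulrBr. Qed.

Lemma WpZ k b s F : Wp k b (fun a => s * F a) = s * Wp k b F.
Proof. by rewrite /Wp big_distrr; apply: eq_bigr => p _ /=; rewrite mulrCA. Qed.

Lemma Wp_sum k b m (G : nat -> C -> R) :
  Wp k b (fun a => \sum_(0 <= i < m) G i a) = \sum_(0 <= i < m) Wp k b (G i).
Proof.
by rewrite /Wp; under eq_bigr do rewrite big_distrr; rewrite exchange_big.
Qed.

Lemma Wp_cat k j b F : Wp (k + j) b F = Wp k b (fun a => Wp j a F).
Proof.
elim: k b => [|k IH] b; first by rewrite Wp0.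
by rewrite addSn !Wp_rec; apply: eq_bigr => c _; rewrite IH.
Qed.

Lemma Wp_last k b F :
  Wp k.+1 b F = Wp k b (fun c => \sum_(a | a != c) X a * F a).
Proof.
rewrite -addn1 Wp_cat; apply: Wp_ext => c; rewrite Wp_rec.
by apply: eq_bigr => a _; rewrite Wp0.
Qed.

Lemma sum_ne_ind c b : \sum_(d | d != c) X d * (d == b)%:R = (b != c)%:R * X b.
Proof.
rewrite big_mkcond (bigD1 b) //= eqxx big1 ?addr0.
  by case: (b != c); rewrite ?mulr1 ?mul1r ?mul0r.
by move=> d /negbTE ->; case: (d != c); rewrite ?mulr0.
Qed.

Lemma W_sym k a b : X b * W k b a = X a * W k a b.
Proof.
elim: k a b => [|k IH] a b.
  by rewrite !Wp0 eq_sym; case: eqP => [->|] //; rewrite !mulr0.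
rewrite Wp_rec Wp_last Wp_lin big_mkcond !big_distrr /=.
apply: eq_bigr => c _; rewrite sum_ne_ind (eq_sym c b).
case: (b != c) => /=; last by rewrite !mul0r !mulr0.
by rewrite mul1r (IH a c); ring.
Qed.

Lemma Wp_swap k (Fa Fb : C -> R) :
  \sum_c X c * Wp k c Fa * Fb c = \sum_a X a * Fa a * Wp k a Fb.
Proof.
under eq_bigr do rewrite Wp_lin big_distrr big_distrl /=.
under [RHS]eq_bigr do rewrite Wp_lin big_distrr /=.
rewrite exchange_big; apply: eq_bigr => a _; apply: eq_bigr => c _ /=.
by rewrite mulrA W_sym; ring.
Qed.

Definition v j b := Wp j b (fun _ => 1).
Definition Cf j (b : C) := Wp j b (fun a => (a != b)%:R).
Definition sig j := \sum_c X c * v j c.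
Definition t j := \sum_c X c * Cf j.-1 c.

Lemma v_rec j b : v j.+1 b = sig j - X b * v j b.
Proof. by rewrite /sig /v Wp_rec [in RHS](bigD1 b) //=; ring. Qed.

Lemma Cf_rec j b : Cf j.+1 b = v j.+1 b - X b * Cf j b.
Proof.
rewrite /Cf /v !Wp_last -WpZ -WpB; apply: Wp_ext => c /=.
rewrite [X b * _]mulrC (eq_sym c b) -sum_ne_ind -sumrB; apply: eq_bigr => a _.
by case: eqP => _ /=; rewrite ?mulr0 ?mulr1 ?subr0 ?subrr.
Qed.

Lemma Cf0 b : Cf 0 b = 0.
Proof. by rewrite /Cf Wp0 eqxx. Qed.

Lemma v0 b : v 0 b = 1.
Proof. by rewrite /v Wp0. Qed.

Lemma Id m : forall b, Cf m.+1 b =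
  m.+1%:R * v m.+1 b - \sum_(0 <= i < m) t (m.+1 - i) * v i b.
Proof.
elim: m => [|m IH] b.
  by rewrite Cf_rec Cf0 mulr0 subr0 big_geq //; ring.
have Et : t m.+2 = m.+1%:R * sig m.+1 - \sum_(0 <= i < m) t (m.+1 - i) * sig i.
  rewrite /t /=; under eq_bigr do rewrite IH.
  rewrite /sig; under eq_bigr do rewrite mulrBr.
  rewrite sumrB; congr (_ - _).
    by rewrite big_distrr; apply: eq_bigr => c _ /=; rewrite mulrCA.
  under eq_bigr do rewrite big_distrr.
  rewrite exchange_big; apply: eq_bigr => i _.
  by rewrite big_distrr; apply: eq_bigr => c _ /=; rewrite mulrCA.
have E1 : X b * v m.+1 b = sig m.+1 - v m.+2 b.
  by rewrite (v_rec m.+1 b) opprB addrC subrK.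
have E2 : X b * (\sum_(0 <= i < m) t (m.+1 - i) * v i b) =
  \sum_(0 <= i < m) t (m.+1 - i) * sig i - \sum_(0 <= i < m) t (m.+1 - i) * v i.+1 b.
  by rewrite big_distrr -sumrB; apply: eq_bigr => i _ /=; rewrite (v_rec i b); ring.
have E3 : \sum_(0 <= i < m) t (m.+2 - i.+1) * v i.+1 b =
   \sum_(0 <= i < m) t (m.+1 - i) * v i.+1 b.
  by apply: eq_bigr => i _; rewrite subSS.
rewrite Cf_rec IH mulrBr E2 (mulrCA (X b)) E1 big_nat_recl // v0 subn0 Et E3.
ring.
Qed.

Definition Gok (G : rooted_graph) (f : {ffun rvtx G -> C}) :=
  [forall x, forall y, radj G x y ==> (f x != f y)].
Arguments Gok : clear implicits.

Lemma chromE G : chrom n G = \sum_(f | Gok G f) \prod_x X (f x).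
Proof. by []. Qed.

Definition extH (H : rooted_graph) (a : C)
  (fS : {ffun {w : rvtx H | w != rroot H} -> C}) (w : rvtx H) : C :=
  if insub w is Some s then fS s else a.
Definition Hok H a fS :=
  [forall u, forall w, radj H u w ==> (@extH H a fS u != extH a fS w)].
Arguments Hok : clear implicits.
Definition WHs H a :=
  \sum_(fS : {ffun {w : rvtx H | w != rroot H} -> C} | Hok H a fS) \prod_s X (fS s).

Section PkS.
Variables (k : nat) (G H : rooted_graph).
Local Notation SH := {w : rvtx H | w != rroot H}.
Local Notation TT := ((({ffun rvtx G -> C} * {ffun 'I_k -> C}) * {ffun SH -> C})%type).

Definition join3 (t : TT) : {ffun PkV k G H -> C} :=
  [ffun v => match v with
             | inl (inl a) => t.1.1 a
             | inl (inr i) => t.1.2 i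
             | inr s => t.2 s end].

Lemma join3_pos t i : join3 t (Pk_pos k G H i) = pc (t.1.1 (rroot G)) t.1.2 i.
Proof.
rewrite /pc; case: i => [|j] /=; rewrite ?ffunE //.
by case: insub.
Qed.

Lemma join3_emb t w :
  join3 t (Pk_embH k G w) = extH (pc (t.1.1 (rroot G)) t.1.2 k) t.2 w.
Proof.
rewrite /Pk_embH /extH; case: (insub w) => [s|]; last exact: join3_pos.
by rewrite ffunE.
Qed.

Lemma Pkok_join3 t : Gok (Pk k G H) (join3 t) =
  [&& Gok G t.1.1, pathok (t.1.1 (rroot G)) t.1.2 &
      Hok H (pc (t.1.1 (rroot G)) t.1.2 k) t.2].
Proof.
apply/idP/idP.
  move=> /forallP h.
  have hh : forall x y, @Pk_adj k G H x y -> join3 t x != join3 t y.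
    by move=> x y; move: (h x) => /forallP /(_ y) /implyP.
  apply/and3P; split.
  - apply/forallP => a; apply/forallP => b; apply/implyP => ab.
    have := hh (inl (inl a)) (inl (inl b)); rewrite !ffunE; apply.
    apply/orP; left; apply/existsP; exists a; apply/existsP; exists b.
    by rewrite ab !eqxx.
  - apply/forallP => i.
    have := hh (Pk_pos k G H i) (Pk_pos k G H i.+1); rewrite !join3_pos; apply.
    apply/orP; right; apply/orP; right; apply/existsP; exists i.
    by rewrite !eqxx.
  - apply/forallP => a; apply/forallP => b; apply/implyP => ab.
    have := hh (Pk_embH k G a) (Pk_embH k G b); rewrite !join3_emb; apply.
    apply/orP; right; apply/orP; left; apply/existsP; exists a; apply/existsP; exists b.
    by rewrite ab !eqxx.
move=> /and3P [hG hP hH]; apply/forallP => x; apply/forallP => y; apply/implyP.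
case/or3P.
- case/existsP => a /existsP [b /and3P [ab /eqP -> /eqP ->]].
  by rewrite !ffunE; move: (forallP (forallP hG a) b) => /implyP; apply.
- case/existsP => a /existsP [b /and3P [ab /eqP -> /eqP ->]].
  by rewrite !join3_emb; move: (forallP (forallP hH a) b) => /implyP; apply.
- case/existsP => i /orP [/andP [/eqP -> /eqP ->]|/andP [/eqP -> /eqP ->]];
    rewrite !join3_pos; last rewrite eq_sym; exact: (forallP hP i).
Qed.

Lemma chrom_Pk : chrom n (Pk k G H) =
  \sum_(fG | Gok G fG) (\prod_x X (fG x)) * Wp k (fG (rroot G)) (WHs H).
Proof.
symmetry; rewrite /Wp.
under eq_bigr do rewrite big_distrr /=.
rewrite pair_big_dep /WHs.
under eq_bigr do rewrite !big_distrr /=.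
rewrite pair_big_dep chromE (reindex join3) /=; last first.
  exists (fun f : {ffun PkV k G H -> C} =>
     (([ffun a => f (inl (inl a))], [ffun i => f (inl (inr i))]), [ffun s => f (inr s)])).
    move=> [[fG p] fS] _ /=.
    by congr (_, _); [congr (_, _)|]; apply/ffunP => ?; rewrite !ffunE.
  by move=> f _; apply/ffunP => -[[a|i]|s]; rewrite !ffunE.
symmetry; apply: eq_big => [[[fG p] fS]|[[fG p] fS] _] /=.
  by rewrite Pkok_join3 /= andbA.
rewrite big_sumType big_sumType /=.
rewrite mulrA; congr (_ * _ * _); apply: eq_bigr => ? _; by rewrite ffunE.
Qed.

End PkS.
Definition fext (H : rooted_graph) a (fS : {ffun {w : rvtx H | w != rroot H} -> C})
  : {ffun rvtx H -> C} := [ffun w => extH a fS w].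

Lemma extH_root (H : rooted_graph) a fS : @extH H a fS (rroot H) = a.
Proof. by rewrite /extH insubF // eqxx. Qed.

Lemma extH_val (H : rooted_graph) a fS s : @extH H a fS (val s) = fS s.
Proof. by rewrite /extH valK. Qed.

Lemma root_split (H : rooted_graph) (Psi : C -> R) :
  \sum_(f | Gok H f) (\prod_x X (f x)) * Psi (f (rroot H)) =
  \sum_a X a * WHs H a * Psi a.
Proof.
symmetry; rewrite /WHs.
under eq_bigr do rewrite big_distrr big_distrl /=.
rewrite pair_big_dep (reindex (fun aS : C * {ffun {w : rvtx H | w != rroot H} -> C}
   => fext aS.1 aS.2)) /=; last first.
  exists (fun f : {ffun rvtx H -> C} => (f (rroot H), [ffun s => f (val s)])).
    move=> [a fS] _ /=; rewrite ffunE extH_root; congr (_, _).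
    by apply/ffunP => s; rewrite !ffunE extH_val.
  move=> f _; apply/ffunP => w; rewrite !ffunE /extH.
  by case: insubP => [s _ <-|/negPn/eqP ->]; rewrite ?ffunE.
apply: eq_big => [[a fS]|[a fS] _] /=.
  by rewrite /Gok /Hok; apply: eq_forallb => u; apply: eq_forallb => w; rewrite !ffunE.
rewrite ffunE extH_root (bigD1 (rroot H)) //= ffunE extH_root.
rewrite (reindex_omap (val : {w : rvtx H | w != rroot H} -> rvtx H) insub).
  congr (_ * _ * _); apply: eq_big => s.
    by rewrite (valP s) valK eqxx.
  by rewrite ffunE extH_val.
by move=> w hw; case: insubP => [s _ <- //|]; rewrite hw.
Qed.

Lemma WHs_K1 a : WHs K1 a = 1.
Proof.
rewrite /WHs (big_pred1 [ffun s => a]).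
  by rewrite big1 // => -[[] h]; exfalso; move/negP: h; apply.
move=> fS /=.
have -> : fS == [ffun s => a].
  by apply/eqP/ffunP => -[[] h]; exfalso; move/negP: h; apply.
by apply/forallP => u; apply/forallP => w.
Qed.

Lemma chrom_tail (H : rooted_graph) m :
  chrom n (tailG H m) = \sum_a X a * WHs H a * v m a.
Proof.
rewrite /tailG chrom_Pk.
under eq_bigr do rewrite (Wp_ext _ _ WHs_K1).
exact: (root_split H (v m)).
Qed.


Lemma Gok_cycle m c (q : {ffun 'I_m.+1 -> C}) :
  Gok (cycleG m.+2) (fcons c q) = pathok c q && (pc c q m.+1 != c).
Proof.
have key : forall u v : 'I_m.+2, pathok c q -> pc c q m.+1 != c ->
    (v : nat) = (u.+1 %% m.+2)%N -> pc c q u != pc c q v.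
  move=> u v hP hc huv; case: (ltnP u.+1 m.+2) => h.
    rewrite modn_small // in huv; rewrite huv.
    exact: (forallP hP (Ordinal (h : (u < m.+1)%N))).
  have hu : (u : nat) = m.+1 by have := ltn_ord u; lia.
  by rewrite hu modnn in huv; rewrite huv hu.
rewrite /Gok; apply/forallP/andP.
  move=> h; split.
    apply/forallP => i.
    have hi1 : (i.+1 < m.+2)%N by have := ltn_ord i.
    have := forallP (h (widen_ord (leqnSn _) i)) (Ordinal hi1).
    rewrite !ffunE /= => /implyP; apply.
    rewrite /cycle_adj /=; apply/andP; split.
      by rewrite -val_eqE /=; lia.
    by rewrite modn_small // eqxx.
  have := forallP (h (@ord_max m.+1)) ord0.
  rewrite !ffunE /= => /implyP; apply.
  by rewrite /cycle_adj /= modnn eqxx.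
move=> [hP hc] u; apply/forallP => w; apply/implyP.
rewrite /= /cycle_adj => /andP [_ /orP [/eqP h|/eqP h]]; rewrite !ffunE.
  exact: key.
rewrite eq_sym; exact: key.
Qed.

Lemma cycle_sum m (Phi : C -> R) :
  \sum_(f : {ffun rvtx (cycleG m.+2) -> C} | Gok (cycleG m.+2) f)
     (\prod_x X (f x)) * Phi (f (rroot (cycleG m.+2))) =
  \sum_c X c * Phi c * Cf m.+1 c.
Proof.
rewrite (sum_fcons (k := m.+1)); apply: eq_bigr => c _.
rewrite (eq_bigl _ _ (@Gok_cycle m c)) big_mkcondr /Cf /Wp big_distrr /=.
apply: eq_bigr => q _; rewrite big_ord_recl fcons0.
have -> : \prod_(i < m.+1) X (fcons c q (lift ord0 i)) = \prod_i X (q i).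
  by apply: eq_bigr => i _; rewrite fcons_lift.
case: (pc c q m.+1 != c) => /=; last by rewrite mulr0n !mulr0.
by rewrite mulr1n mulr1 mulrAC.
Qed.

Lemma chrom_cycle j : (2 <= j)%N -> chrom n (cycleG j) = t j.
Proof.
case: j => [|[|m]] // _; rewrite chromE.
transitivity (\sum_(f | Gok (cycleG m.+2) f)
   (\prod_x X (f x)) * (fun _ => 1) (f (rroot (cycleG m.+2)))).
  by apply: eq_bigr => f _; rewrite mulr1.
rewrite (cycle_sum m (fun _ => 1)) /t /=; apply: eq_bigr => c _; by rewrite mulr1.
Qed.

Lemma Wp_Id k m a : Wp k a (Cf m.+1) =
  m.+1%:R * v (k + m.+1) a - \sum_(0 <= i < m) t (m.+1 - i) * v (k + i) a.
Proof.
rewrite (Wp_ext _ _ (Id m)) WpB WpZ Wp_sum /v Wp_cat; congr (_ - _).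
by apply: eq_bigr => i _; rewrite WpZ Wp_cat.
Qed.

End S.

Unset Implicit Arguments.

Theorem proposition3p2 (H : rooted_graph) (hH : simple_rgraph H) (k g : nat)
    (hg : (2 <= g)%N) (n : nat) :
  chrom n (Pk k (cycleG g) H) =
    (g - 1)%:R * chrom n (tailG H (k + g - 1))
    - \sum_(1 <= l < g - 1) chrom n (cycleG (g - l)) * chrom n (tailG H (k + l - 1)).
Proof.
case: g hg => [|[|m]] // _.
have e2 : (k + m.+2 - 1 = k + m.+1)%N by lia.
have e1 : (m.+2 - 1 = m.+1)%N by lia.
rewrite e2 e1 big_add1 /=.
rewrite (eq_big_nat _ _ (F2 := fun i => t n (m.+1 - i) *
   \sum_a 'X_a * WHs H a * v (k + i) a)); last first.
  move=> i /andP [_ hi].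
  rewrite chrom_cycle; last by lia.
  rewrite chrom_tail.
  have -> : (m.+2 - i.+1 = m.+1 - i)%N by lia.
  by have -> : (k + i.+1 - 1 = k + i)%N by lia.
rewrite chrom_tail chrom_Pk.
etransitivity; first exact: (cycle_sum m (fun c => Wp k c (WHs H))).
rewrite /= Wp_swap.
rewrite (eq_bigr (fun a => 'X_a * WHs H a * (m.+1%:R * v (k + m.+1) a - \sum_(0 <= i < m) t n (m.+1 - i) * v (k + i) a))); last first.
  by move=> a _; rewrite Wp_Id.
under eq_bigr do rewrite mulrBr.
rewrite sumrB; congr (_ - _).
  by rewrite big_distrr; apply: eq_bigr => a _ /=; rewrite mulrCA.
under eq_bigr do rewrite big_distrr.
rewrite exchange_big; apply: eq_bigr => i _.
by rewrite big_distrr; apply: eq_bigr => a _ /=; rewrite mulrCA.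
Qed.
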